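(* Let $\mathbf A$ be an interior $r\ell u$-groupoid, $\mathbf B$ a partial subalgebra of $\mathbf A$, and let $(eq)$ be any one of the equations $(\mathsf e),(\mathsf c),(\mathsf i),(!\mathsf c),(!\mathsf e),(!\mathsf i),(!\mathsf a1),(!\mathsf a2)$. If $(eq)$ holds in $\mathbf A$, then it also holds in $\mathbf F^+_{\mathbf A,\mathbf B}$. (The same holds for an interior $r\ell uz$-groupoid $\mathbf A$, with $\mathbf F_{\mathbf A,\mathbf B}$ regarded as an enriched $ruz$-frame for any choice of $\epsilon\in T_B$; the listed equations do not involve $0$.)
   Context: An $r\ell u$-groupoid is an algebra $(A,\wedge,\vee,\cdot,\backslash,/,1)$ with $(A,\wedge,\vee)$ a lattice (order $\le$), $(A,\cdot,1)$ a unital groupoid (binary operation, not necessarily associative, with two-sided unit $1$), and $x\cdot y\le z\iff y\le x\backslash z\iff x\le z/y$; an $r\ell uz$-groupoid additionally has an arbitrary constant $0$. An interior one has a unary $!$ with $1\le !1$, $!x\cdot!y\le !(x\cdot y)$, $!x\le x$, $!x\le !!x$, $x\le y\Rightarrow !x\le !y$. Equations: $(\mathsf e)$ $x\cdot y\le y\cdot x$; $(\mathsf c)$ $x\le x\cdot x$; $(\mathsf i)$ $x\le 1$; $(!\mathsf i)$ $!x\le 1$; $(!\mathsf c)$ $!x\le !x\cdot !x$; $(!\mathsf e)$ $!x\cdot y=y\cdot !x$; $(!\mathsf a1)$ $!x\cdot(y\cdot z)=(!x\cdot y)\cdot z$; $(!\mathsf a2)$ $x\cdot(y\cdot !z)=(x\cdot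 y)\cdot !z$. A partial subalgebra $\mathbf B$ of $\mathbf A$ is a subset $B$ with $f^{\mathbf B}(\vec b)=f^{\mathbf A}(\vec b)$ if this lies in $B$, undefined otherwise. Enriched $ru$-frame: $(G,T,N,K)$ with $(G,\cdot,\varepsilon)$ a unital groupoid, $T$ a set, $N\subseteq G\times T$ nuclear (for all $x,y\in G,z\in T$ there are $x\backslash\!\!\backslash z, z/\!\!/y\in T$ with $x\cdot y\,N\,z\iff y\,N\,x\backslash\!\!\backslash z\iff x\,N\,z/\!\!/y$), $K$ a sub-unital-groupoid of $G$; an enriched $ruz$-frame additionally has $\epsilon\in T$. $X^{\rhd}=\{t\mid\forall x\in X\,xNt\}$, $Y^{\lhd}=\{g\mid\forall y\in Y\,gNy\}$, $\gamma_N(X)=X^{\rhd\lhd}$. $\mathbf F^+$: universe the closed sets ($\gamma_N(X)=X$), $X\wedge Y=X\cap Y$, $X\vee Y=\gamma_N(X\cup Y)$, $X\cdot Y=\gamma_N(X\circ Y)$ with $X\circ Y=\{x\cdot y\}$, $X\backslash Y=\{z\mid X\circ\{z\}\subseteq Y\}$, $Y/X=\{z\mid \{z\}\circ X\subseteq Y\}$, $!X=\gamma_N(X\cap K)$, unit $\gamma_N(\{\varepsilon\})$, and in the $ruz$ case zero $\{\epsilon\}^{\lhd}$. $\mathbf F_{\mathbf A,\mathbf B}=(G_B,T_B,N_B,K_B)$: $G_B$ the sub-unital-groupoid of $(A,\cdot,1)$ generated by $B$; $U_{G_B}$ the unary linear polynomials over $G_B$ (maps given by a groupoid term with one variable occurring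 exactly once and other leaves in $G_B$, including $\mathrm{id}$); $T_B=U_{G_B}\times B$; $x\,N_B\,(u,b)$ iff $u(x)\le^{\mathbf A}b$; $K_B$ the sub-unital-groupoid generated by $\{!^{\mathbf A}b\mid b\in B,\ !^{\mathbf A}b\in B\}$. *)

(* Defs.v *)
Record irlu_groupoid := {
  car :> Type;
  le : car -> car -> Prop;
  meet : car -> car -> car;
  join : car -> car -> car;
  mul : car -> car -> car;
  ldiv : car -> car -> car;
  rdiv : car -> car -> car;
  one : car;
  bang : car -> car;
  le_refl : forall x, le x x;
  le_trans : forall x y z, le x y -> le y z -> le x z;
  le_antisym : forall x y, le x y -> le y x -> x = y;
  meet_glb : forall x y z, le z (meet x y) <-> (le z x /\ le z y);
  join_lub : forall x y z, le (join x y) z <-> (le x z /\ le y z);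
  mul1l : forall x, mul one x = x;
  mul1r : forall x, mul x one = x;
  res_l : forall x y z, le (mul x y) z <-> le y (ldiv x z);
  res_r : forall x y z, le (mul x y) z <-> le x (rdiv z y);
  bang_one : le one (bang one);
  bang_mul : forall x y, le (mul (bang x) (bang y)) (bang (mul x y));
  bang_defl : forall x, le (bang x) x;
  bang_idem : forall x, le (bang x) (bang (bang x));
  bang_mono : forall x y, le x y -> le (bang x) (bang y)
}.

Inductive eqn := Ee | Ec | Ei | Ebc | Ebe | Ebi | Eba1 | Eba2.

Definition holds_in_A (A : irlu_groupoid) (e : eqn) : Prop :=
  let le := le A in let m := mul A in let b := bang A in
  match e with
  | Ee => forall x y : A, le (m x y) (m y x)
  | Ec => forall x : A, le x (m x x)
  | Ei => forall x : A, le x (one A)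
  | Ebc => forall x : A, le (b x) (m (b x) (b x))
  | Ebe => forall x y : A, m (b x) y = m y (b x)
  | Ebi => forall x : A, le (b x) (one A)
  | Eba1 => forall x y z : A, m (b x) (m y z) = m (m (b x) y) z
  | Eba2 => forall x y z : A, m x (m y (b z)) = m (m x y) (b z)
  end.

Section Frame.
Variable A : irlu_groupoid.
Variable B : A -> Prop.   (* the universe of the partial subalgebra B *)

Inductive GB : A -> Prop :=
  | GB_base : forall b, B b -> GB b
  | GB_one : GB (one A)
  | GB_mul : forall x y, GB x -> GB y -> GB (mul A x y).

Inductive KB : A -> Prop :=
  | KB_base : forall b, B b -> B (bang A b) -> KB (bang A b)
  | KB_one : KB (one A)
  | KB_mul : forall x y, KB x -> KB y -> KB (mul A x y).

(* unary linear polynomials: groupoid terms with exactly one occurrence of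
   the variable; the path from the root to the variable *)
Inductive ctx := Hole | CL (g : A) (c : ctx) | CR (c : ctx) (g : A).

Fixpoint plug (c : ctx) (x : A) : A :=
  match c with
  | Hole => x
  | CL g c' => mul A g (plug c' x)
  | CR c' g => mul A (plug c' x) g
  end.

Fixpoint ctx_over_GB (c : ctx) : Prop :=
  match c with
  | Hole => True
  | CL g c' => GB g /\ ctx_over_GB c'
  | CR c' g => ctx_over_GB c' /\ GB g
  end.

Definition TB (t : ctx * A) : Prop := ctx_over_GB (fst t) /\ B (snd t).

Definition NB (x : A) (t : ctx * A) : Prop := le A (plug (fst t) x) (snd t).

Definition rhd (X : A -> Prop) : ctx * A -> Prop :=
  fun t => TB t /\ forall x, X x -> NB x t.
Definition lhd (Y : ctx * A -> Prop) : A -> Prop :=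
  fun g => GB g /\ forall t, Y t -> NB g t.
Definition gammaN (X : A -> Prop) : A -> Prop := lhd (rhd X).

(* universe of F^+ : the closed subsets of G_B *)
Definition closed (X : A -> Prop) : Prop :=
  (forall x, GB x -> (gammaN X x <-> X x)) /\ (forall x, X x -> GB x).

Definition set_le (X Y : A -> Prop) : Prop := forall x, X x -> Y x.
Definition set_eq (X Y : A -> Prop) : Prop := forall x, X x <-> Y x.

Definition circ (X Y : A -> Prop) : A -> Prop :=
  fun z => exists x y, X x /\ Y y /\ z = mul A x y.
Definition Fmul (X Y : A -> Prop) : A -> Prop := gammaN (circ X Y).
Definition Fone : A -> Prop := gammaN (fun z => z = one A).
Definition Fbang (X : A -> Prop) : A -> Prop := gammaN (fun z => X z /\ KB z).

Definition holds_in_Fplus (e : eqn) : Prop :=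
  match e with
  | Ee => forall X Y, closed X -> closed Y -> set_le (Fmul X Y) (Fmul Y X)
  | Ec => forall X, closed X -> set_le X (Fmul X X)
  | Ei => forall X, closed X -> set_le X Fone
  | Ebc => forall X, closed X -> set_le (Fbang X) (Fmul (Fbang X) (Fbang X))
  | Ebe => forall X Y, closed X -> closed Y ->
             set_eq (Fmul (Fbang X) Y) (Fmul Y (Fbang X))
  | Ebi => forall X, closed X -> set_le (Fbang X) Fone
  | Eba1 => forall X Y Z, closed X -> closed Y -> closed Z ->
             set_eq (Fmul (Fbang X) (Fmul Y Z)) (Fmul (Fmul (Fbang X) Y) Z)
  | Eba2 => forall X Y Z, closed X -> closed Y -> closed Z ->
             set_eq (Fmul X (Fmul Y (Fbang Z))) (Fmul (Fmul X Y) (Fbang Z))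
  end.

End Frame.

(* Main.v *)
Require Import Defs.

Lemma mul_monol (A : irlu_groupoid) x x' y : le A x x' -> le A (mul A x y) (mul A x' y).
Proof.
  intro H. apply (proj2 (res_r A x y _)).
  apply le_trans with x'; auto. apply (proj1 (res_r A x' y _)). apply le_refl.
Qed.

Lemma mul_monor (A : irlu_groupoid) x y y' : le A y y' -> le A (mul A x y) (mul A x y').
Proof.
  intro H. apply (proj2 (res_l A x y _)).
  apply le_trans with y'; auto. apply (proj1 (res_l A x y' _)). apply le_refl.
Qed.

Lemma plug_mono (A : irlu_groupoid) c x y : le A x y -> le A (plug A c x) (plug A c y).
Proof.
  intro H; induction c; simpl; auto.
  - apply mul_monor; auto.
  - apply mul_monol; auto.
Qed.

Fixpoint capp (A : irlu_groupoid) (c d : ctx A) : ctx A :=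
  match c with
  | Hole _ => d
  | CL _ g c' => CL A g (capp A c' d)
  | CR _ c' g => CR A (capp A c' d) g
  end.

Lemma plug_capp (A : irlu_groupoid) (c d : ctx A) x : plug A (capp A c d) x = plug A c (plug A d x).
Proof. induction c; simpl; congruence. Qed.

Lemma capp_GB (A : irlu_groupoid) (B : A -> Prop) (c d : ctx A) : ctx_over_GB A B c -> ctx_over_GB A B d -> ctx_over_GB A B (capp A c d).
Proof. induction c; simpl; tauto. Qed.

Lemma gamma_elim (A : irlu_groupoid) (B : A -> Prop) (S : A -> Prop) z c b : gammaN A B S z -> ctx_over_GB A B c -> B b ->
  (forall s, S s -> le A (plug A c s) b) -> le A (plug A c z) b.
Proof.
  intros [_ H] Hc Hb Hs. apply (H (c, b)). split; [split; auto|].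
  intros x Hx. unfold NB; simpl; auto.
Qed.

Lemma to_gamma (A : irlu_groupoid) (B : A -> Prop) (W : A -> Prop) z : GB A B z ->
  (forall c b, ctx_over_GB A B c -> B b -> (forall w, W w -> le A (plug A c w) b) ->
     le A (plug A c z) b) -> gammaN A B W z.
Proof.
  intros Gz H. split; auto. intros [c b] [[Hc Hb] Hw]. unfold NB; simpl.
  apply H; auto.
Qed.

Lemma gamma_GB (A : irlu_groupoid) (B : A -> Prop) S z : gammaN A B S z -> GB A B z.
Proof. intros [H _]; auto. Qed.

Lemma gamma_ext (A : irlu_groupoid) (B : A -> Prop) (S : A -> Prop) z : GB A B z -> S z -> gammaN A B S z.
Proof. intros Gz Sz. apply to_gamma; auto. Qed.

Lemma gamma_sub (A : irlu_groupoid) (B : A -> Prop) (S W : A -> Prop) : (forall z, S z -> gammaN A B W z) ->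
  set_le A (gammaN A B S) (gammaN A B W).
Proof.
  intros H z Hz. apply to_gamma; [exact (gamma_GB _ _ _ _ Hz)|].
  intros c b Hc Hb Hw. apply (gamma_elim A B S z c b Hz Hc Hb).
  intros s Ss. apply (gamma_elim A B W s c b (H s Ss) Hc Hb Hw).
Qed.

Lemma KB_fix (A : irlu_groupoid) (B : A -> Prop) k : KB A B k -> bang A k = k.
Proof.
  induction 1.
  - apply le_antisym; [apply bang_defl | apply bang_idem].
  - apply le_antisym; [apply bang_defl | apply bang_one].
  - apply le_antisym; [apply bang_defl|].
    eapply le_trans; [|apply bang_mul]. rewrite IHKB1, IHKB2. apply le_refl.
Qed.

Theorem mainTheorem9 (A : irlu_groupoid) (B : A -> Prop) (e : eqn) :
  holds_in_A A e -> holds_in_Fplus A B e.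
Proof.
  destruct e; simpl; intro H.
  - intros X Y HX HY. apply gamma_sub. intros z [x [y [Hx [Hy ->]]]].
    apply to_gamma. { apply GB_mul; [apply HX | apply HY]; auto. }
    intros c b Hc Hb Hw. apply le_trans with (plug A c (mul A y x)).
    + apply plug_mono, H.
    + apply Hw. exists y, x; auto.
  - intros X HX x Hx. apply to_gamma. { apply HX; auto. }
    intros c b Hc Hb Hw. apply le_trans with (plug A c (mul A x x)).
    + apply plug_mono, H.
    + apply Hw. exists x, x; auto.
  - intros X HX x Hx. apply to_gamma. { apply HX; auto. }
    intros c b Hc Hb Hw. apply le_trans with (plug A c (one A)).
    + apply plug_mono, H.
    + apply Hw. reflexivity.
  - intros X HX. unfold Fbang at 1. apply gamma_sub. intros z [Xz Kz].
    assert (Gz : GB A B z) by (apply HX; auto).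
    apply to_gamma; auto. intros c b Hc Hb Hw.
    apply le_trans with (plug A c (mul A z z)).
    + apply plug_mono. pose proof (H z) as Hz. rewrite (KB_fix A B z Kz) in Hz. exact Hz.
    + apply Hw. exists z, z. split; [|split]; auto; apply gamma_ext; auto.
  - intros X Y HX HY z. split; intro Hz; revert z Hz; apply gamma_sub;
      intros w [p [y [Hp [Hy ->]]]].
    + apply to_gamma. { apply GB_mul; [exact (gamma_GB _ _ _ _ Hp) | apply HY; auto]. }
      intros c b Hc Hb Hw.
      change (mul A p y) with (plug A (CR A (Hole A) y) p). rewrite <- plug_capp.
      apply (gamma_elim A B _ p _ b Hp); auto.
      { apply capp_GB; simpl; auto. split; auto; apply HY; auto. }
      intros k [Xk Kk]. rewrite plug_capp. simpl.
      rewrite <- (KB_fix A B k Kk), H, (KB_fix A B k Kk).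
      apply Hw. exists y, k. split; [|split]; auto. apply gamma_ext; auto. apply HX; auto.
    + apply to_gamma. { apply GB_mul; [apply HY; auto | exact (gamma_GB _ _ _ _ Hy)]. }
      intros c b Hc Hb Hw.
      change (mul A p y) with (plug A (CL A p (Hole A)) y). rewrite <- plug_capp.
      apply (gamma_elim A B _ y _ b Hy); auto.
      { apply capp_GB; simpl; auto. split; auto; apply HY; auto. }
      intros k [Xk Kk]. rewrite plug_capp. simpl.
      rewrite <- (KB_fix A B k Kk), <- H, (KB_fix A B k Kk).
      apply Hw. exists k, p. split; [|split]; auto. apply gamma_ext; auto. apply HX; auto.
  - intros X HX. apply gamma_sub. intros z [Xz Kz].
    apply to_gamma. { apply HX; auto. }
    intros c b Hc Hb Hw. apply le_trans with (plug A c (one A)).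
    + apply plug_mono. rewrite <- (KB_fix A B z Kz). apply H.
    + apply Hw. reflexivity.
  - intros X Y Z HX HY HZ w. split; intro Hw0; revert w Hw0; apply gamma_sub;
      intros w [p [v [Hp [Hv ->]]]].
    + apply to_gamma. { apply GB_mul; eapply gamma_GB; eauto. }
      intros c b Hc Hb Hw.
      change (mul A p v) with (plug A (CR A (Hole A) v) p). rewrite <- plug_capp.
      apply (gamma_elim A B _ p _ b Hp); auto.
      { apply capp_GB; simpl; auto. split; auto. eapply gamma_GB; eauto. }
      intros k [Xk Kk]. rewrite plug_capp. simpl.
      assert (Gk : GB A B k) by (apply HX; auto).
      change (mul A k v) with (plug A (CL A k (Hole A)) v). rewrite <- plug_capp.
      apply (gamma_elim A B _ v _ b Hv); auto.
      { apply capp_GB; simpl; auto. }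
      intros s [y [z [Hy [Hz ->]]]]. rewrite plug_capp. simpl.
      assert (Gy : GB A B y) by (apply HY; auto).
      assert (Gz : GB A B z) by (apply HZ; auto).
      replace (mul A k (mul A y z)) with (mul A (mul A k y) z).
      2:{ rewrite <- (KB_fix A B k Kk). symmetry. apply H. }
      apply Hw. exists (mul A k y), z. split; [|split]; auto.
      apply gamma_ext. { apply GB_mul; auto. }
      exists k, y. split; [|split]; auto. apply gamma_ext; auto.
    + assert (Gv : GB A B v) by (apply HZ; auto).
      apply to_gamma. { apply GB_mul; auto; eapply gamma_GB; eauto. }
      intros c b Hc Hb Hw.
      change (mul A p v) with (plug A (CR A (Hole A) v) p). rewrite <- plug_capp.
      apply (gamma_elim A B _ p _ b Hp); auto.
      { apply capp_GB; simpl; auto. }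
      intros s [q [y [Hq [Hy ->]]]]. rewrite plug_capp. simpl.
      assert (Gy : GB A B y) by (apply HY; auto).
      change (mul A (mul A q y) v) with (plug A (CR A (CR A (Hole A) y) v) q).
      rewrite <- plug_capp.
      apply (gamma_elim A B _ q _ b Hq); auto.
      { apply capp_GB; simpl; auto. }
      intros k [Xk Kk]. rewrite plug_capp. simpl.
      assert (Gk : GB A B k) by (apply HX; auto).
      replace (mul A (mul A k y) v) with (mul A k (mul A y v)).
      2:{ rewrite <- (KB_fix A B k Kk). apply H. }
      apply Hw. exists k, (mul A y v). split; [|split]; auto.
      * apply gamma_ext; auto.
      * apply gamma_ext. { apply GB_mul; auto. } exists y, v; auto.
  - intros X Y Z HX HY HZ w. split; intro Hw0; revert w Hw0; apply gamma_sub;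
      intros w [p [v [Hp [Hv ->]]]].
    + assert (Gp : GB A B p) by (apply HX; auto).
      apply to_gamma. { apply GB_mul; auto; eapply gamma_GB; eauto. }
      intros c b Hc Hb Hw.
      change (mul A p v) with (plug A (CL A p (Hole A)) v). rewrite <- plug_capp.
      apply (gamma_elim A B _ v _ b Hv); auto.
      { apply capp_GB; simpl; auto. }
      intros s [y [q [Hy [Hq ->]]]]. rewrite plug_capp. simpl.
      assert (Gy : GB A B y) by (apply HY; auto).
      change (mul A p (mul A y q)) with (plug A (CL A p (CL A y (Hole A))) q).
      rewrite <- plug_capp.
      apply (gamma_elim A B _ q _ b Hq); auto.
      { apply capp_GB; simpl; auto. }
      intros k [Zk Kk]. rewrite plug_capp. simpl.
      assert (Gk : GB A B k) by (apply HZ; auto).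
      replace (mul A p (mul A y k)) with (mul A (mul A p y) k).
      2:{ rewrite <- (KB_fix A B k Kk). symmetry. apply H. }
      apply Hw. exists (mul A p y), k. split; [|split]; auto.
      * apply gamma_ext. { apply GB_mul; auto. } exists p, y; auto.
      * apply gamma_ext; auto.
    + assert (Gp : GB A B p) by (eapply gamma_GB; eauto).
      apply to_gamma. { apply GB_mul; auto; eapply gamma_GB; eauto. }
      intros c b Hc Hb Hw.
      change (mul A p v) with (plug A (CL A p (Hole A)) v). rewrite <- plug_capp.
      apply (gamma_elim A B _ v _ b Hv); auto.
      { apply capp_GB; simpl; auto. }
      intros k [Zk Kk]. rewrite plug_capp. simpl.
      assert (Gk : GB A B k) by (apply HZ; auto).
      change (mul A p k) with (plug A (CR A (Hole A) k) p). rewrite <- plug_capp.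
      apply (gamma_elim A B _ p _ b Hp); auto.
      { apply capp_GB; simpl; auto. }
      intros s [x [y [Hx [Hy ->]]]]. rewrite plug_capp. simpl.
      assert (Gx : GB A B x) by (apply HX; auto).
      assert (Gy : GB A B y) by (apply HY; auto).
      replace (mul A (mul A x y) k) with (mul A x (mul A y k)).
      2:{ rewrite <- (KB_fix A B k Kk). apply H. }
      apply Hw. exists x, (mul A y k). split; [|split]; auto.
      apply gamma_ext. { apply GB_mul; auto. }
      exists y, k. split; [|split]; auto. apply gamma_ext; auto.
Qed.
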